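(* Let $n\ge1$, $a_{i0}>0$, $a_{ij}\ge 0$ and $\pi_i>0$ for $i,j=1,\ldots,n$, and assume $$\kappa:=\min_{i=1,\ldots,n}\Big(8\pi_i a_{ii}-\sum_{j=1,\,j\neq i}^n\pi_j a_{ji}\Big)>0.$$ Let $\varepsilon>0$ and let $\mu_1,\ldots,\mu_n$ satisfy $\mu_i\ge\sum_{j\ne i}(a_{ij}+a_{ji})/2$. For $u\in(0,\infty)^n$ define $$A_{ij}(u)=\delta_{ij}a_{i0}+\delta_{ij}\sum_{k=1}^na_{ik}u_k+a_{ij}u_i,\quad A_\varepsilon(u)=A(u)+\varepsilon A^0(u),\quad A^0_{ij}(u)=\delta_{ij}\frac{\mu_i}{\pi_i}u_i^2,$$ $$H_{\varepsilon,ij}(u)=\delta_{ij}\Big(\frac{\pi_i}{u_i^2}+\frac{\varepsilon}{u_i}\Big),$$ and for $\eta>0$ write $u+\eta=(u_1+\eta,\ldots,u_n+\eta)$. Then there exists $\eta_0>0$ such that for all $0<\eta\le\eta_0$, $u\in(0,\infty)^n$ and $z\in\mathbb{R}^n$, $$z^TH_\varepsilon(u+\eta)A_\varepsilon(u)z\ge\frac{\kappa}{4}\sum_{i=1}^n\frac{z_i^2}{u_i+\eta}-\eta\varepsilon C_1\sum_{i=1}^n\frac{z_i^2}{u_i+\eta}-\eta\varepsilon^2C_2\sum_{i=1}^nz_i^2,$$ where $C_1>0$ depends only on $(a_{ij})$ and $(\mu_i)$, and $C_2>0$ depends only on $(\mu_i/\pi_i)$.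
   Context: $\delta_{ij}$ is the Kronecker symbol. *)

(* Defs.v *)
From mathcomp Require Import all_boot all_order all_algebra.
Set Implicit Arguments. Unset Strict Implicit. Unset Printing Implicit Defensive.
Import Order.TTheory GRing.Theory Num.Theory.
Local Open Scope ring_scope.

(* Vectors in R^n are column vectors 'cV[R]_n; entry i is written v i 0. *)
Section Defs.
Variables (R : realFieldType) (n : nat).

Definition kdelta (i j : 'I_n) : R := (i == j)%:R.

Definition Amat (a0 : 'cV[R]_n) (a : 'M[R]_n) (u : 'cV[R]_n) : 'M[R]_n :=
  \matrix_(i, j) (kdelta i j * a0 i 0 + kdelta i j * (\sum_k a i k * u k 0)
                  + a i j * u i 0).

Definition A0mat (mu pi u : 'cV[R]_n) : 'M[R]_n :=
  \matrix_(i, j) (kdelta i j * (mu i 0 / pi i 0) * u i 0 ^+ 2).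

Definition Aeps (eps : R) (a0 : 'cV[R]_n) (a : 'M[R]_n) (mu pi u : 'cV[R]_n)
  : 'M[R]_n := Amat a0 a u + eps *: A0mat mu pi u.

Definition Heps (eps : R) (pi u : 'cV[R]_n) : 'M[R]_n :=
  \matrix_(i, j) (kdelta i j * (pi i 0 / u i 0 ^+ 2 + eps / u i 0)).

Definition shiftv (u : 'cV[R]_n) (eta : R) : 'cV[R]_n := \col_i (u i 0 + eta).

Definition kappa_i (a : 'M[R]_n) (pi : 'cV[R]_n) (i : 'I_n) : R :=
  8 * pi i 0 * a i i - \sum_(j | j != i) pi j 0 * a j i.

Definition qform (M : 'M[R]_n) (z : 'cV[R]_n) : R := ((z^T *m M *m z) 0 0).
End Defs.

(* Main.v *)
Require Import Defs.
From mathcomp Require Import all_boot all_order all_algebra.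
From mathcomp Require Import ring lra.
Import Order.TTheory GRing.Theory Num.Theory.
Local Open Scope ring_scope.

Section S.
Variables (R : realFieldType) (n : nat).

Lemma sum_kd (i : 'I_n) (f : 'I_n -> R) : \sum_j kdelta R i j * f j = f i.
Proof.
rewrite (bigD1 i) //= /kdelta eqxx mul1r big1 ?addr0 // => j /negbTE.
by rewrite eq_sym => ->; rewrite mul0r.
Qed.

Lemma row_expand (h eps : R) (a0 : 'cV[R]_n) (a : 'M[R]_n) (mu pi u z : 'cV[R]_n) i :
  \sum_j z i 0 * (h * Aeps eps a0 a mu pi u i j) * z j 0 =
  h * z i 0 ^+ 2 * (a0 i 0 + eps * (mu i 0 / pi i 0 * u i 0 ^+ 2))
  + \sum_j h * a i j * (u j 0 * z i 0 ^+ 2 + u i 0 * z i 0 * z j 0).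
Proof.
have -> : \sum_j z i 0 * (h * Aeps eps a0 a mu pi u i j) * z j 0 =
   \sum_j (kdelta R i j * (h * z i 0 * (a0 i 0 + (\sum_k a i k * u k 0)
              + eps * (mu i 0 / pi i 0 * u i 0 ^+ 2)) * z j 0)
          + h * a i j * (u i 0 * z i 0 * z j 0)).
  apply: eq_bigr => j _; rewrite /Aeps !mxE; ring.
rewrite big_split /= sum_kd.
have -> : \sum_j h * a i j * (u j 0 * z i 0 ^+ 2 + u i 0 * z i 0 * z j 0) =
   h * z i 0 ^+ 2 * (\sum_k a i k * u k 0) + \sum_j h * a i j * (u i 0 * z i 0 * z j 0).
  rewrite big_distrr -big_split /=; apply: eq_bigr => j _; ring.
ring.
Qed.
Lemma qform_HA (h : 'I_n -> R) (A : 'M[R]_n) (z : 'cV[R]_n) :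
  qform (\matrix_(i, j) (kdelta R i j * h i) *m A) z =
  \sum_i \sum_j z i 0 * (h i * A i j) * z j 0.
Proof.
rewrite /qform !mxE exchange_big; apply: eq_bigr => j _.
rewrite mxE big_distrl /=; apply: eq_bigr => i _.
rewrite !mxE; congr (_ * _ * _).
under eq_bigr do rewrite mxE -mulrA.
by rewrite sum_kd.
Qed.
End S.

Ltac pos := repeat (first [ assumption | exact: sqr_ge0 | exact: ltW | apply: mulr_ge0 | apply: divr_ge0 | apply: addr_ge0 | rewrite invr_ge0 | lra | done]).
Section S2. Variable R : realFieldType.
Lemma pair_lb (pi a eps eta ui uj zi zj : R) : 0 < pi -> 0 <= a -> 0 < eps ->
  0 < ui -> 0 < uj -> 0 < eta ->
  - (eta * pi * (zi ^+ 2 / (ui + eta) ^+ 2) + eps * ((ui / (ui + eta)) ^+ 2 * zi ^+ 2) / 2) * a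
  - ((zj ^+ 2 / (uj + eta)) / 4 * (pi * a) + eps * zj ^+ 2 / 2 * a)
  <= (pi / (ui + eta) ^+ 2 + eps / (ui + eta)) * a * (uj * zi ^+ 2 + ui * zi * zj).
Proof.
move=> hp ha he hui huj het.
have hvi : 0 < ui + eta by lra.
have hvj : 0 < uj + eta by lra.
have hvi0 : ui + eta != 0 by rewrite gt_eqF.
have hvj0 : uj + eta != 0 by rewrite gt_eqF.
set vi := ui + eta in hvi hvi0 *; set vj := uj + eta in hvj hvj0 *.
have ht1 : ui / vi <= 1 by rewrite ler_pdivrMr // mul1r /vi; lra.
have ht0 : 0 <= ui / vi by rewrite divr_ge0 //; exact: ltW.
rewrite -subr_ge0; set L := (X in 0 <= X).
have -> : L = pi * a * vj * ((zi / vi + (ui / vi) * (zj / vj) / 2) ^+ 2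
     + (1 - (ui / vi) ^+ 2) * (zj / vj) ^+ 2 / 4)
   + eps * a * uj * zi ^+ 2 / vi + eps * a * ((ui / vi) * zi + zj) ^+ 2 / 2.
  rewrite /L /vi /vj; field; by rewrite ?hvi0 ?hvj0.
have h1t : 0 <= 1 - (ui / vi) ^+ 2.
  rewrite subr_ge0 expr2; have := ler_pM ht0 ht0 ht1 ht1; by rewrite mul1r.
pos.
Qed.
Lemma diag_lb (pi a0 mu eps eta aii u z : R) : 0 < pi -> 0 < u -> 0 < eta -> 0 < eps ->
  0 <= aii -> 0 <= mu -> 0 <= a0 ->
  pi * a0 * (z ^+ 2 / (u + eta) ^+ 2) + eps * mu * ((u / (u + eta)) ^+ 2 * z ^+ 2)
  + 2 * pi * aii * (z ^+ 2 / (u + eta) - eta * (z ^+ 2 / (u + eta) ^+ 2))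
  <= (pi / (u + eta) ^+ 2 + eps / (u + eta)) * z ^+ 2 * (a0 + eps * (mu / pi * u ^+ 2))
   + (pi / (u + eta) ^+ 2 + eps / (u + eta)) * aii * (u * z ^+ 2 + u * z * z).
Proof.
move=> hp hu het he haii hmu ha0.
have hv : 0 < u + eta by lra.
have hv0 : u + eta != 0 by rewrite lt0r_neq0.
have hp0 : pi != 0 by rewrite lt0r_neq0.
set v := u + eta in hv hv0 *.
rewrite -subr_ge0; set L := (X in 0 <= X).
have -> : L = eps * a0 * z ^+ 2 / v + eps ^+ 2 * (mu / pi) * u ^+ 2 * z ^+ 2 / v
     + 2 * eps * aii * u * z ^+ 2 / v.
  rewrite /L /v; field; by rewrite ?hv0 ?hp0.
pos.
Qed.

Lemma final_lb (pi a0 aii A B S mu kap C1 eps eta u z : R) :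
  0 < pi -> 0 < u -> 0 < eta -> 0 < eps -> 0 <= A -> 0 <= B ->
  eta * (2 * aii + A) <= a0 -> kap <= 8 * pi * aii - S -> (A + B) / 2 <= mu ->
  2 * mu <= C1 ->
  kap / 4 * (z ^+ 2 / (u + eta)) - eta * eps * C1 * (z ^+ 2 / (u + eta)) <=
  pi * a0 * (z ^+ 2 / (u + eta) ^+ 2) + eps * mu * ((u / (u + eta)) ^+ 2 * z ^+ 2)
  + 2 * pi * aii * (z ^+ 2 / (u + eta) - eta * (z ^+ 2 / (u + eta) ^+ 2))
  - (eta * pi * (z ^+ 2 / (u + eta) ^+ 2) + eps * ((u / (u + eta)) ^+ 2 * z ^+ 2) / 2) * A
  - ((z ^+ 2 / (u + eta)) / 4 * S + eps * z ^+ 2 / 2 * B).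
Proof.
move=> hp hu het he hA hB h1 h2 h3 h4.
have hv : 0 < u + eta by lra.
have hv0 : u + eta != 0 by rewrite lt0r_neq0.
have hmu : 0 <= mu by lra.
set v := u + eta in hv hv0 *.
have ht1 : u / v <= 1 by rewrite ler_pdivrMr // mul1r /v; lra.
have ht0 : 0 <= u / v by rewrite divr_ge0 //; exact: ltW.
have h1t : 0 <= 1 - (u / v) ^+ 2.
  rewrite subr_ge0 expr2; have := ler_pM ht0 ht0 ht1 ht1; by rewrite mul1r.
rewrite -subr_ge0; set L := (X in 0 <= X).
have -> : L = pi * (z ^+ 2 / v ^+ 2) * (a0 - eta * (2 * aii + A))
    + (z ^+ 2 / v) / 4 * (8 * pi * aii - S - kap)
    + eps * z ^+ 2 * ((mu - (A + B) / 2) + (1 - (u / v) ^+ 2) * A / 2)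
    + eps * eta * (z ^+ 2 / v ^+ 2) * ((C1 - 2 * mu) * v + mu * eta).
  rewrite /L /v; field; by rewrite ?hv0.
have e1 : 0 <= a0 - eta * (2 * aii + A) by lra.
have e2 : 0 <= 8 * pi * aii - S - kap by lra.
have e3 : 0 <= mu - (A + B) / 2 by lra.
have e4 : 0 <= C1 - 2 * mu by lra.
pos.
Qed.
End S2.

Theorem lemma11 (R : realFieldType) (n : nat) :
  (0 < n)%N ->
  exists (C1 : 'M[R]_n -> 'cV[R]_n -> R) (C2 : 'cV[R]_n -> R),
    (forall a mu, 0 < C1 a mu) /\ (forall r, 0 < C2 r) /\
    forall (a0 : 'cV[R]_n) (a : 'M[R]_n) (pi mu : 'cV[R]_n) (kappa eps : R),
      (forall i, 0 < a0 i 0) ->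
      (forall i j, 0 <= a i j) ->
      (forall i, 0 < pi i 0) ->
      (* kappa = min_i (8 pi_i a_ii - sum_{j<>i} pi_j a_ji) *)
      (forall i, kappa <= kappa_i a pi i) ->
      (exists i, kappa = kappa_i a pi i) ->
      0 < kappa ->
      0 < eps ->
      (forall i, (\sum_(j | j != i) (a i j + a j i)) / 2 <= mu i 0) ->
      exists eta0 : R, 0 < eta0 /\
        forall (eta : R) (u z : 'cV[R]_n),
          0 < eta -> eta <= eta0 ->
          (forall i, 0 < u i 0) ->
          qform (Heps eps pi (shiftv u eta) *m Aeps eps a0 a mu pi u) z
          >= kappa / 4 * (\sum_i z i 0 ^+ 2 / (u i 0 + eta))
             - eta * eps * C1 a mu * (\sum_i z i 0 ^+ 2 / (u i 0 + eta))
             - eta * eps ^+ 2 * C2 (\col_i (mu i 0 / pi i 0))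
                 * (\sum_i z i 0 ^+ 2).
Proof.
move=> _.
exists (fun a mu => 1 + 2 * \sum_k `|mu k 0|), (fun _ => 1).
split.
  move=> a mu; have : 0 <= \sum_k `|mu k 0| by apply: sumr_ge0 => k _.
  lra.
split; first by move=> _; exact: ltr01.
move=> a0 a pi mu kappa eps ha0 ha hpi hk _ hkpos heps hmu.
pose D i := a i i + \sum_j a i j.
have hD : forall i, 0 <= D i.
  by move=> i; apply: addr_ge0 => //; apply: sumr_ge0.
pose Sg := \sum_i D i / a0 i 0.
have hSg : 0 <= Sg by apply: sumr_ge0 => i _; apply: divr_ge0 => //; exact: ltW.
exists (1 / (1 + Sg)); split; first by apply: divr_gt0 => //; lra.
move=> eta u z heta hle hu.
have hetaD : forall i, eta * D i <= a0 i 0.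
  move=> i.
  have h1 : D i / a0 i 0 <= Sg.
    rewrite /Sg (bigD1 i) //= lerDl; apply: sumr_ge0 => j _.
    by apply: divr_ge0 => //; exact: ltW.
  have h2 : D i <= a0 i 0 * Sg.
    by rewrite mulrC -ler_pdivrMr.
  have h3 : eta * (1 + Sg) <= 1 by rewrite -ler_pdivlMr ?mul1r //; lra.
  have h4 : eta * D i <= eta * (a0 i 0 * Sg) by rewrite ler_pM2l.
  have h5 : eta * (a0 i 0 * Sg) <= a0 i 0.
    have : a0 i 0 * (eta * (1 + Sg)) <= a0 i 0 * 1 by rewrite ler_pM2l.
    have := ha0 i; have : 0 <= eta * (a0 i 0 * Sg) by pos.
    move=> *; nra.
  exact: le_trans h4 h5.
have -> : Heps eps pi (shiftv u eta) = \matrix_(i, j) (kdelta R i j *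
     (pi i 0 / (u i 0 + eta) ^+ 2 + eps / (u i 0 + eta))).
  by apply/matrixP => i j; rewrite !mxE.
rewrite qform_HA.

rewrite (eq_bigr _ (fun i _ => @row_expand R n _ _ _ _ _ _ _ _ i)).
pose A i := \sum_(j | j != i) a i j.
pose B i := \sum_(j | j != i) a j i.
pose S i := \sum_(j | j != i) pi j 0 * a j i.
pose X i := eta * pi i 0 * (z i 0 ^+ 2 / (u i 0 + eta) ^+ 2)
   + eps * ((u i 0 / (u i 0 + eta)) ^+ 2 * z i 0 ^+ 2) / 2.
pose Y i j := (z j 0 ^+ 2 / (u j 0 + eta)) / 4 * (pi i 0 * a i j) + eps * z j 0 ^+ 2 / 2 * a i j.
pose dL i := pi i 0 * a0 i 0 * (z i 0 ^+ 2 / (u i 0 + eta) ^+ 2)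
  + eps * mu i 0 * ((u i 0 / (u i 0 + eta)) ^+ 2 * z i 0 ^+ 2)
  + 2 * pi i 0 * a i i * (z i 0 ^+ 2 / (u i 0 + eta) - eta * (z i 0 ^+ 2 / (u i 0 + eta) ^+ 2)).
have hmu0 : forall i, 0 <= mu i 0.
  move=> i; apply: le_trans (hmu i); apply: divr_ge0 => //.
  by apply: sumr_ge0 => j _; apply: addr_ge0.
have step1 : \sum_i (dL i + \sum_(j | j != i) (- X i * a i j - Y i j)) <=
   \sum_i ((pi i 0 / (u i 0 + eta) ^+ 2 + eps / (u i 0 + eta)) * z i 0 ^+ 2 *
           (a0 i 0 + eps * (mu i 0 / pi i 0 * u i 0 ^+ 2)) +
         \sum_j (pi i 0 / (u i 0 + eta) ^+ 2 + eps / (u i 0 + eta)) * a i j *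
           (u j 0 * z i 0 ^+ 2 + u i 0 * z i 0 * z j 0)).
  apply: ler_sum => i _.
  rewrite [X in _ <= _ + X](bigD1 i) //= addrA; apply: lerD.
    by apply: diag_lb => //; exact: ltW.
  apply: ler_sum => j _; exact: pair_lb.
apply: le_trans step1.
have step2 : \sum_i (dL i + \sum_(j | j != i) (- X i * a i j - Y i j)) =
   \sum_i (dL i - X i * A i - ((z i 0 ^+ 2 / (u i 0 + eta)) / 4 * S i + eps * z i 0 ^+ 2 / 2 * B i)).
  have e1 : forall i, \sum_(j | j != i) (- X i * a i j - Y i j) = - (X i * A i) - \sum_(j | j != i) Y i j.
    move=> i; rewrite sumrB; congr (_ - _).
    by rewrite /A big_distrr /= -sumrN; apply: eq_bigr => j _; ring.
  under eq_bigr do rewrite e1.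
  rewrite [RHS]sumrB.
  under eq_bigr do rewrite addrA.
  rewrite sumrB; congr (_ - _).
  rewrite (exchange_big_dep xpredT) //=.
  apply: eq_bigr => j _; rewrite big_split /S /B -!big_distrr /=.
  by congr (_ * _ + _ * _); apply: eq_bigl => i; rewrite eq_sym.
rewrite step2.
apply: (@le_trans _ _ (\sum_i (kappa / 4 * (z i 0 ^+ 2 / (u i 0 + eta))
   - eta * eps * (1 + 2 * \sum_k `|mu k 0|) * (z i 0 ^+ 2 / (u i 0 + eta))))).
  rewrite sumrB -!big_distrr /=.
  have : 0 <= eta * eps ^+ 2 * 1 * \sum_i z i 0 ^+ 2.
    by apply: mulr_ge0; [pos | apply: sumr_ge0 => i _; exact: sqr_ge0].
  lra.
apply: ler_sum => i _.
apply: final_lb => //.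
- by apply: sumr_ge0.
- by apply: sumr_ge0.
- have := hetaD i; rewrite /D (bigD1 i) //=.
  suff -> : a i i + (a i i + \sum_(j | j != i) a i j) = 2 * a i i + A i by [].
  rewrite /A; ring.
- by have := hk i; rewrite /kappa_i.
- by have := hmu i; rewrite big_split.
- have h1 : mu i 0 <= `|mu i 0| by exact: ler_norm.
  have h2 : `|mu i 0| <= \sum_k `|mu k 0|.
    by rewrite (bigD1 i) //= lerDl; apply: sumr_ge0.
  lra.
Qed.
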